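(* Let $\mathcal{H}$ be a complex Hilbert space and let $A\in\mathcal{B}(\mathcal{H})$ be invertible. For a unit vector $x$ put \[ \xi(x)=\frac{\left|\langle A^2x,x\rangle-\langle Ax,x\rangle^2\right|}{\|A^*x\|}. \] Then \[ \inf_{\|x\|=1}\xi^2(x)+\omega^2(A)\le \|A\|^2 . \]
   Context: $\mathcal{B}(\mathcal{H})$ denotes the algebra of bounded linear operators on $\mathcal{H}$; $\omega(A)=\sup_{\|x\|=1}|\langle Ax,x\rangle|$ is the numerical radius and $\|\cdot\|$ the operator norm. *)

(* Defs.v *)
From HB Require Import structures.
From mathcomp Require Import all_boot all_order all_algebra.
From mathcomp Require Import classical_sets reals.
From mathcomp Require Import complex.

Set Implicit Arguments.
Unset Strict Implicit.
Unset Printing Implicit Defensive.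

Import Order.TTheory GRing.Theory Num.Theory.
Local Open Scope ring_scope.
Local Open Scope classical_set_scope.

Section Hilbert.
Variables (R : realType) (V : lmodType R[i]) (ip : V -> V -> R[i]).

Definition is_inner_product : Prop :=
  [/\ (forall (a : R[i]) (x y z : V), ip (a *: x + y) z = a * ip x z + ip y z),
      (forall x y : V, ip y x = conjc (ip x y)),
      (forall x : V, 0 <= ip x x) &
      (forall x : V, ip x x = 0 -> x = 0)].

Definition hnorm (x : V) : R := Num.sqrt (complex.Re (ip x x)).

Definition hcomplete : Prop :=
  forall u : nat -> V,
    (forall e : R, 0 < e -> exists N : nat, forall m n : nat,
        (N <= m)%N -> (N <= n)%N -> hnorm (u m - u n) < e) ->
    exists l : V, forall e : R, 0 < e -> exists N : nat, forall n : nat,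
        (N <= n)%N -> hnorm (u n - l) < e.

Definition is_hilbert : Prop := is_inner_product /\ hcomplete.

Definition bounded_op (A : V -> V) : Prop :=
  [/\ (forall x y : V, A (x + y) = A x + A y),
      (forall (a : R[i]) (x : V), A (a *: x) = a *: A x) &
      exists M : R, forall x : V, hnorm (A x) <= M * hnorm x].

Definition invertible_op (A : V -> V) : Prop :=
  exists B : V -> V, [/\ bounded_op B, (forall x, A (B x) = x) & (forall x, B (A x) = x)].

Definition is_adjoint (A Astar : V -> V) : Prop :=
  forall x y : V, ip (A x) y = ip x (Astar y).

Definition unit_sphere : set V := [set x | hnorm x = 1].

Definition opnorm (A : V -> V) : R := sup [set hnorm (A x) | x in unit_sphere].

Definition numrad (A : V -> V) : R := sup [set Normc.normc (ip (A x) x) | x in unit_sphere].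

Definition xi (A Astar : V -> V) (x : V) : R :=
  Normc.normc (ip (A (A x)) x - (ip (A x) x) ^+ 2) / hnorm (Astar x).

End Hilbert.

(* Main.v *)
Require Import Defs.
From HB Require Import structures.
From mathcomp Require Import all_boot all_order all_algebra.
From mathcomp Require Import boolp classical_sets reals.
From mathcomp Require Import complex ring lra.
Import Order.TTheory GRing.Theory Num.Theory.
Local Open Scope ring_scope.
Local Open Scope classical_set_scope.
Section S.
Variable R : realType.
Import Normc.
Local Open Scope complex_scope.
Lemma normC_def (z : R[i]) : `|z| = (normc z)%:C. Proof. by []. Qed.
Lemma normcJ (z : R[i]) : ((normc z) ^+ 2)%:C = z * conjc z.
Proof.
case: z => a b /=. rewrite sqr_sqrtr ?addr_ge0 ?sqr_ge0 //.
apply/eqP; rewrite eq_complex /=; simpc; apply/eqP; ring.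
Qed.
Lemma normc_ge0 (z : R[i]) : 0 <= normc z.
Proof. by case: z => a b /=; rewrite sqrtr_ge0. Qed.
Variables (V : lmodType R[i]) (ip : V -> V -> R[i]).
Hypothesis Hip : is_inner_product ip.

Lemma ipDZ a x y z : ip (a *: x + y) z = a * ip x z + ip y z.
Proof. by case: Hip => H _ _ _; apply: H. Qed.
Lemma ipC x y : ip y x = conjc (ip x y).
Proof. by case: Hip => _ H _ _; apply: H. Qed.
Lemma ip_ge0 x : 0 <= ip x x.
Proof. by case: Hip => _ _ H _; apply: H. Qed.
Lemma ip_eq0 x : ip x x = 0 -> x = 0.
Proof. by case: Hip => _ _ _ H; apply: H. Qed.
Lemma ip0l z : ip 0 z = 0.
Proof.
have := ipDZ 1 0 0 z; rewrite scaler0 addr0 mul1r => H.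
by apply: (addrI (ip 0 z)); rewrite addr0 -H.
Qed.
Lemma ipDl x y z : ip (x + y) z = ip x z + ip y z.
Proof. by have := ipDZ 1 x y z; rewrite scale1r mul1r. Qed.
Lemma ipZl a x z : ip (a *: x) z = a * ip x z.
Proof. by rewrite -[a *: x]addr0 ipDZ ip0l addr0. Qed.
Lemma ipNl x z : ip (- x) z = - ip x z.
Proof. by rewrite -scaleN1r ipZl mulN1r. Qed.
Lemma ipBl x y z : ip (x - y) z = ip x z - ip y z.
Proof. by rewrite ipDl ipNl. Qed.
Lemma ipDr x y z : ip z (x + y) = ip z x + ip z y.
Proof. by rewrite [LHS]ipC ipDl rmorphD [ip z x]ipC [ip z y]ipC. Qed.
Lemma ipZr a x z : ip z (a *: x) = conjc a * ip z x.
Proof. by rewrite [LHS]ipC ipZl rmorphM [ip z x]ipC. Qed.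
Lemma ipBr x y z : ip z (x - y) = ip z x - ip z y.
Proof. by rewrite [LHS]ipC ipBl rmorphB [ip z x]ipC [ip z y]ipC. Qed.
Lemma ip0r z : ip z 0 = 0.
Proof. by rewrite [LHS]ipC ip0l rmorph0. Qed.
Lemma ipJ x : conjc (ip x x) = ip x x.
Proof. by rewrite -ipC. Qed.

Lemma CS u v : ip u v * conjc (ip u v) <= ip u u * ip v v.
Proof.
have [/ip_eq0 ->|qn0] := eqVneq (ip v v) 0.
  by rewrite !ip0r mul0r mulr0.
set q := ip v v; set c := ip u v; set p := ip u u.
have qp : 0 < q by rewrite lt_def qn0 ip_ge0.
have := ip_ge0 (q *: u - c *: v).
rewrite !ipBl !ipZl !ipBr !ipZr !ipJ -/q -/c -/p.
rewrite [ip v u]ipC -/c.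
have -> : q * (q * p - conjc c * c) - c * (q * conjc c - conjc c * q)
   = q * (q * p - c * conjc c) by ring.
by rewrite pmulr_rge0 // subr_ge0 [q * p]mulrC.
Qed.
Lemma hnormJ y : ((hnorm ip y) ^+ 2)%:C = ip y y.
Proof.
rewrite /hnorm sqr_sqrtr; last by have := ip_ge0 y; rewrite lecE => /andP[].
by apply: RRe_real; apply: ger0_real; apply: ip_ge0.
Qed.

Variables (A Astar : V -> V).
Hypothesis HAs : is_adjoint ip A Astar.

Lemma key x : hnorm ip x = 1 ->
  xi ip A Astar x ^+ 2 + normc (ip (A x) x) ^+ 2 <= hnorm ip (A x) ^+ 2.
Proof.
move=> hx.
have xx1 : ip x x = 1 by rewrite -hnormJ hx expr1n.
set a := ip (A x) x; set b := Astar x; set w := A x - a *: x.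
have ha : a = ip x b by rewrite /a /b HAs.
have hd : ip (A (A x)) x - a ^+ 2 = ip w b.
  by rewrite /w ipBl ipZl -ha HAs expr2.
have hw : ip w w = ip (A x) (A x) - a * conjc a.
  rewrite /w !ipBl !ipZl !ipBr !ipZr xx1 -/a [ip x (A x)]ipC -/a; ring.
have cs := CS w b.
have w0 := ip_ge0 w.
rewrite /xi hd expr_div_n -lecR rmorphD rmorphM fmorphV /= !normcJ !hnormJ.
have [q0|qn0] := eqVneq (ip b b) 0.
  by rewrite q0 invr0 mulr0 add0r -subr_ge0 -hw.
have qp : 0 < ip b b by rewrite lt_def qn0 ip_ge0.
rewrite -[ip (A x) (A x)](subrK (a * conjc a)) -hw lerD2r.
by rewrite ler_pdivrMr.
Qed.
End S.

Import Normc.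
Theorem theorem3p5 (R : realType) (V : lmodType R[i]) (ip : V -> V -> R[i])
  (HH : is_hilbert ip) (A Astar : V -> V)
  (HA : bounded_op ip A) (HAinv : invertible_op ip A)
  (HAstar : is_adjoint ip A Astar) :
  inf [set (xi ip A Astar x) ^+ 2 | x in unit_sphere ip] + numrad ip A ^+ 2
    <= opnorm ip A ^+ 2.
Proof.
have Hip : is_inner_product ip by case: HH.
case: HA => _ _ [M HM].
rewrite /numrad /opnorm.
set U := unit_sphere ip.
have [[x0 Ux0]|U0] := pselect (exists x, U x); last first.
  have -> : U = set0.
    by apply/seteqP; split => x // Ux; exfalso; apply: U0; exists x.
  by rewrite !image_set0 inf0 sup0 expr0n /= add0r.
have Ux1 x : U x -> hnorm ip x = 1 by [].
set S := [set xi ip A Astar x ^+ 2 | x in U].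
have lbS : has_lbound S by exists 0 => _ [x _ <-]; exact: sqr_ge0.
have hI x : U x -> inf S <= xi ip A Astar x ^+ 2.
  by move=> Ux; apply: ge_inf lbS _ _; exists x.
set T := [set hnorm ip (A x) | x in U].
have ubT : has_ubound T.
  by exists M => _ [x /Ux1 Ux <-]; have := HM x; rewrite Ux mulr1.
have hT x : U x -> hnorm ip (A x) <= sup T.
  by move=> Ux; apply: ub_le_sup ubT _ _; exists x.
have hT2 x : U x -> hnorm ip (A x) ^+ 2 <= sup T ^+ 2.
  move=> Ux; apply: lerXn2r; rewrite ?nnegrE ?sqrtr_ge0 ?hT //.
  exact: le_trans (sqrtr_ge0 _) (hT x Ux).
have hK x : U x -> normc (ip (A x) x) ^+ 2 <= sup T ^+ 2 - inf S.
  move=> Ux; have := @key R V ip Hip A Astar HAstar x (Ux1 x Ux).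
  have := hI x Ux; have := hT2 x Ux; lra.
have K0 : 0 <= sup T ^+ 2 - inf S.
  exact: le_trans (sqr_ge0 _) (hK x0 Ux0).
have hN x : U x -> normc (ip (A x) x) <= Num.sqrt (sup T ^+ 2 - inf S).
  move=> Ux; rewrite -(ger0_norm (@normc_ge0 R (ip (A x) x))) -sqrtr_sqr.
  exact: ler_wsqrtr (hK x Ux).
set N := [set normc (ip (A x) x) | x in U].
have ubN : has_ubound N by exists (Num.sqrt (sup T ^+ 2 - inf S)) => _ [x Ux <-]; exact: hN.
have hsN : sup N <= Num.sqrt (sup T ^+ 2 - inf S).
  apply: ge_sup; first by exists (normc (ip (A x0) x0)), x0.
  by move=> _ [x Ux <-]; exact: hN.
have N0 : 0 <= sup N.
  apply: le_trans (@normc_ge0 R (ip (A x0) x0)) _.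
  by apply: ub_le_sup ubN _ _; exists x0.
have : sup N ^+ 2 <= Num.sqrt (sup T ^+ 2 - inf S) ^+ 2.
  by apply: lerXn2r; rewrite ?nnegrE ?sqrtr_ge0.
rewrite sqr_sqrtr //; lra.
Qed.
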